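(* Let $d$ and $p$ be integers with $d>p\ge 2$ and let \[ f_{d,p}(m)=\sum_{j=1}^{p}\binom{j+m-2}{j-1}\binom{d-j+m}{d-j}. \] If $d-2p+2\ge 0$, then the set of complex roots of $f_{d,p}$ is \[ \{-1,-2,\ldots,-(d-p),\alpha_1,\alpha_2,\ldots,\alpha_{p-1}\}, \] where $\alpha_1,\ldots,\alpha_{p-1}$ are real numbers with \[ -(p-1)<\alpha_{p-1}<-(p-2)<\alpha_{p-2}<-(p-3)<\cdots<-1<\alpha_1<0. \]
   Context: For an integer $a\ge 0$, $\binom{a+x}{a}$ denotes the polynomial $\prod_{i=1}^{a}(x+i)/a!$ in $x$; so $\binom{j+m-2}{j-1}=\prod_{i=0}^{j-2}(m+i)/(j-1)!$ and $\binom{d-j+m}{d-j}=\prod_{i=1}^{d-j}(m+i)/(d-j)!$. *)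

(* Defs.v *)
From mathcomp Require Import all_boot all_order all_algebra.
Set Implicit Arguments. Unset Strict Implicit. Unset Printing Implicit Defensive.
Import Order.TTheory GRing.Theory Num.Theory.
Local Open Scope ring_scope.

(* binom(j+m-2, j-1) as a polynomial in m: prod_{i=0}^{j-2} (m+i) / (j-1)! *)
Definition binA (C : fieldType) (j : nat) : {poly C} :=
  ((j.-1)`!%:R)^-1 *: \prod_(0 <= i < j.-1) ('X + (i%:R)%:P).

(* binom(d-j+m, d-j) as a polynomial in m: prod_{i=1}^{d-j} (m+i) / (d-j)! *)
Definition binB (C : fieldType) (d j : nat) : {poly C} :=
  (((d - j)%N)`!%:R)^-1 *: \prod_(1 <= i < (d - j).+1) ('X + (i%:R)%:P).

Definition fdp (C : fieldType) (d p : nat) : {poly C} :=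
  \sum_(1 <= j < p.+1) binA C j * binB C d j.

(* Main.v *)
Require Import Defs.
From mathcomp Require Import all_boot all_order all_algebra.
From mathcomp Require Import zify ring.
Import Order.TTheory GRing.Theory Num.Theory.
Local Open Scope ring_scope.

Section IVT.
Variable C : numClosedFieldType.
Implicit Types g h : {poly C}.

Lemma hornerJ g x : map_poly Num.conj g = g -> g.[x^*] = (g.[x])^*.
Proof. by move=> gJ; rewrite -[in LHS]gJ horner_map. Qed.

Lemma ivtC (n : nat) g (a b : C) : (size g <= n)%N -> map_poly Num.conj g = g ->
  a \is Num.real -> b \is Num.real -> g.[a] * g.[b] < 0 ->
  exists2 x, x \is Num.real & ((a < x < b) || (b < x < a)) && root g x.
Proof.
elim: n g => [|n IH] g.
  rewrite leqn0 size_poly_eq0 => /eqP-> _ _ _; by rewrite !horner0 mul0r ltxx.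
move=> sg gJ aR bR gab.
have g0 : g != 0 by apply: contraTneq gab => ->; rewrite !horner0 mul0r ltxx.
have [sg1|sg1] := eqVneq (size g) 1%N.
  have [c gc] : exists c, g = c%:P.
    by exists g`_0; apply: size1_polyC; rewrite sg1.
  subst g; move: gab; rewrite !hornerC; have cJ : c^* = c.
    by move: gJ; rewrite map_polyC => /polyC_inj.
  by rewrite -{2}cJ => /lt_geF; rewrite mul_conjC_ge0.
have [r rr] := closed_rootP _ sg1.
have ga0 : g.[a] != 0 by apply: contraTneq gab => ->; rewrite mul0r ltxx.
have gb0 : g.[b] != 0 by apply: contraTneq gab => ->; rewrite mulr0 ltxx.
have [rR|rNR] := boolP (r \is Num.real).
  set h := g %/ ('X - r%:P).
  have ghr : g = h * ('X - r%:P) by rewrite divpK // dvdp_XsubCl.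
  have hJ : map_poly Num.conj h = h.
    by rewrite /h map_divp gJ rmorphB /= map_polyX map_polyC /= conj_Creal.
  have sh : (size h <= n)%N.
    rewrite /h size_divp ?polyXsubC_eq0 // size_XsubC /=.
    by move: sg; case: (size g) => //= k; rewrite subn1.
  have [|nab] := boolP ((a < r < b) || (b < r < a)).
    by move=> H; exists r => //; rewrite H rr.
  have rna : r != a by apply: contraNneq ga0 => <-; exact: rr.
  have rnb : r != b by apply: contraNneq gb0 => <-; exact: rr.
  have pos : 0 < ('X - r%:P).[a] * ('X - r%:P).[b].
    rewrite !hornerXsubC.
    have [ar|ra|ear] := real_ltgtP aR rR; last by rewrite ear eqxx in rna.
      have [br|rb|ebr] := real_ltgtP bR rR; last by rewrite ebr eqxx in rnb.
        by rewrite -mulrNN mulr_gt0 // oppr_gt0 subr_lt0.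
      by move: nab; rewrite ar rb.
    have [br|rb|ebr] := real_ltgtP bR rR; last by rewrite ebr eqxx in rnb.
      by move: nab; rewrite ra br orbT.
    by rewrite mulr_gt0 // subr_gt0.
  have hab : h.[a] * h.[b] < 0.
    by move: gab; rewrite ghr !hornerM mulrACA pmulr_llt0.
  have [x xR /andP[xab xh]] := IH h sh hJ aR bR hab.
  by exists x => //; rewrite xab ghr rootM xh.
have rJr : root g r^* by rewrite /root hornerJ // (eqP rr) conjC0.
have rJ : r^* != r by rewrite -CrealE.
set g1 := g %/ ('X - r%:P).
have g1r : g = g1 * ('X - r%:P) by rewrite divpK // dvdp_XsubCl.
have g1rJ : root g1 r^*.
  move: rJr; rewrite g1r rootM root_XsubC (negPf rJ) orbF //.
set h := g1 %/ ('X - r^*%:P).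
have hr : g1 = h * ('X - r^*%:P) by rewrite divpK // dvdp_XsubCl.
set q := ('X - r^*%:P) * ('X - r%:P).
have ghq : g = h * q by rewrite /q mulrA -hr.
have q0 : q != 0 by rewrite mulf_neq0 // polyXsubC_eq0.
have hJ : map_poly Num.conj h = h.
  have -> : h = g %/ q by rewrite ghq mulpK.
  rewrite map_divp gJ /q rmorphM !rmorphB /= map_polyX !map_polyC /= conjCK.
  by rewrite mulrC ghq mulpK.
have sh : (size h <= n)%N.
  have : size g = (size h + 2)%N.
    rewrite ghq size_mul ?q0 //; last by apply: contraNneq g0 => h0; rewrite ghq h0 mul0r.
    rewrite /q size_mul ?polyXsubC_eq0 // !size_XsubC /=.
    by case: (size h) => [|k]; rewrite ?addnS.
  move: sg => /[swap] ->; lia.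
have qpos c : c \is Num.real -> 0 < q.[c].
  move=> cR; rewrite /q hornerM !hornerXsubC.
  have -> : c - r^* = (c - r)^* by rewrite rmorphB /= (conj_Creal cR).
  rewrite mulrC mul_conjC_gt0 subr_eq0.
  by apply: contraNneq rNR => <-.
have hab : h.[a] * h.[b] < 0.
  move: gab; rewrite ghq !hornerM mulrACA pmulr_llt0 //.
  by have := mulr_gt0 (qpos _ aR) (qpos _ bR); rewrite /q !hornerM.
have [x xR /andP[xab xh]] := IH h sh hJ aR bR hab.
by exists x => //; rewrite xab ghq rootM xh.
Qed.
End IVT.


Section Sg.
Variable C : numClosedFieldType.

Lemma pascalD (u : nat -> C) i x : (0 < x)%N ->
  \sum_(k < i.+2) (-1)^+k * ('C(i.+1,k)%:R : C) * u (x - k)%N =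
  \sum_(k < i.+1) (-1)^+k * ('C(i,k)%:R : C) * u (x - k)%N -
  \sum_(k < i.+1) (-1)^+k * ('C(i,k)%:R : C) * u (x.-1 - k)%N.
Proof.
move=> x0.
rewrite big_ord_recl /= expr0 bin0 mul1r subn0.
have -> : \sum_(k < i.+1) (-1) ^+ (bump 0 k) * ('C(i.+1, bump 0 k)%:R : C) * u (x - bump 0 k)%N
  = \sum_(k < i.+1) (-1) ^+ k.+1 * ('C(i, k.+1)%:R : C) * u (x - k.+1)%N
    - \sum_(k < i.+1) (-1) ^+ k * ('C(i, k)%:R : C) * u (x.-1 - k)%N.
  rewrite -sumrB; apply: eq_bigr => k _.
  rewrite /bump /= add1n binS natrD exprS.
  have -> : (x.-1 - k = x - k.+1)%N by lia.
  ring.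
rewrite addrA; congr (_ - _).
rewrite [in RHS]big_ord_recl /= expr0 bin0 mul1r subn0; congr (_ + _).
rewrite big_ord_recr /= bin_small // mulr0n mulr0 mul0r addr0.
by apply: eq_bigr => k _; rewrite /bump /= add1n.
Qed.

Lemma altF m i x : (m + i <= x)%N ->
  \sum_(k < i.+1) (-1)^+k * ('C(i,k)%:R : C) / ((x - k) ^_ m)%:R =
  (-1)^+i * (((m + i).-1 ^_ i)%:R) / ((x ^_ (m + i))%:R).
Proof.
elim: i x => [|i IH] x hx.
  by rewrite big_ord1 /= expr0 bin0 mul1r subn0 addn0.
have x0' : (0 < x)%N by lia.
have P := pascalD (fun y => ((y ^_ m)%:R : C)^-1) i x x0'.
cbv beta in P; rewrite P.
rewrite IH ?IH; try lia.
have hA : (x ^_ (m + i.+1))%:R = (x ^_ (m + i))%:R * ((x%:R : C) - (m + i)%:R).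
  by rewrite addnS ffactnSr natrM natrB //; lia.
have hB : (x ^_ (m + i.+1))%:R = (x%:R : C) * (x.-1 ^_ (m + i))%:R.
  by rewrite addnS ffactnS natrM.
have hr : ((m + i.+1).-1 ^_ i.+1)%:R = ((m + i)%:R : C) * ((m + i).-1 ^_ i)%:R.
  have -> : (m + i.+1).-1 = (m + i)%N by lia.
  by rewrite ffactnS natrM.
have A0 : (x ^_ (m + i))%:R != 0 :> C by rewrite pnatr_eq0 -lt0n ffact_gt0; lia.
have B0 : (x.-1 ^_ (m + i))%:R != 0 :> C by rewrite pnatr_eq0 -lt0n ffact_gt0; lia.
have x0 : x%:R != 0 :> C by rewrite pnatr_eq0; lia.
rewrite hr.
have -> : (x ^_ (m + i.+1))%:R = (x ^_ (m + i))%:R * ((x%:R : C) - (m + i)%:R) by exact: hA.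
have EB : (x.-1 ^_ (m + i))%:R = (x ^_ (m + i))%:R * ((x%:R : C) - (m + i)%:R) / x%:R.
  by rewrite -hA hB [X in _ = X / _]mulrC mulfK.
rewrite EB.
have D0 : ((x%:R : C) - (m + i)%:R) != 0.
  by rewrite -natrB ?pnatr_eq0; lia.
move: A0 D0 x0; set A := (x ^_ (m + i))%:R; set D := _ - _; set X := (x%:R : C).
rewrite -/D.
move=> A0 D0 X0.
have XD : X = D + (m + i)%:R by rewrite /D subrK.
rewrite XD in X0; rewrite XD exprS.
field.
by rewrite A0 D0 /= -natrD.

Qed.
End Sg.


Section M2.
Variable C : numClosedFieldType.

Lemma lin_eval (t i : nat) : ('X + (t%:R)%:P : {poly C}).[- (i%:R)] = t%:R - i%:R.
Proof. by rewrite hornerD hornerX hornerC addrC. Qed.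

Lemma prod_sub k i : \prod_(0 <= t < k) ((t%:R : C) - i%:R) = (-1)^+k * (i ^_ k)%:R.
Proof.
elim: k => [|k IH]; first by rewrite big_geq // expr0 mul1r ffactn0.
rewrite big_nat_recr //= IH ffactnSr natrM exprS.
have [ki|ik] := leqP k i.
  rewrite natrB //; ring.
rewrite ffact_small //.
by rewrite mulr0 !mul0r mulr0.
Qed.

Lemma binA_eval j i : (binA C j).[- (i%:R)] = (-1)^+(j.-1) * ('C(i, j.-1))%:R.
Proof.
rewrite /binA hornerZ horner_prod.
rewrite (eq_bigr _ (fun t _ => lin_eval t i)) prod_sub -bin_ffact natrM.
have f0 : ((j.-1)`!%:R : C) != 0 by rewrite pnatr_eq0 -lt0n fact_gt0.
by field.
Qed.

Lemma prod_fact a b i : (a <= b)%N -> (i <= a)%N ->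
  ((a - i)`! * \prod_(a.+1 <= t < b.+1) (t - i) = (b - i)`!)%N.
Proof.
move=> ab ia; elim: b ab => [|b IH] ab.
  by rewrite big_geq // muln1; have -> : a = 0%N by lia.
have [ab'|ab'] := leqP a b.
  rewrite big_nat_recr /=; last by lia.
  rewrite mulnA IH //.
  have -> : (b.+1 - i = (b - i).+1)%N by lia.
  by rewrite factS mulnC.
have -> : a = b.+1 by lia.
by rewrite big_geq // muln1.
Qed.
End M2.


Section Main.
Variable C : numClosedFieldType.
Variables d p : nat.

Definition PP : {poly C} := \prod_(1 <= i < (d - p).+1) ('X + (i%:R)%:P).
Definition QQ j : {poly C} := \prod_((d - p).+1 <= i < (d - j).+1) ('X + (i%:R)%:P).
Definition gg : {poly C} :=
  \sum_(1 <= j < p.+1) binA C j * ((((d - j)%N)`!%:R)^-1 *: QQ j).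

Lemma fdp_fact : fdp C d p = PP * gg.
Proof.
rewrite /fdp /gg mulr_sumr big_nat_cond [RHS]big_nat_cond.
apply: eq_bigr => j /andP[/andP[j1 jp] _].
rewrite /binB (big_cat_nat _ (n := (d - p).+1)) //=; last by lia.
by rewrite scalerAr mulrCA.
Qed.

Lemma root_PP z : root PP z <-> exists2 k : nat, (1 <= k <= d - p)%N & z = - (k%:R).
Proof.
rewrite /root /PP horner_prod prodf_seq_eq0; split.
  move=> /hasP[k]; rewrite mem_index_iota => kr /=.
  rewrite hornerD hornerX hornerC addr_eq0 => /eqP ->.
  by exists k => //; lia.
move=> [k kr ->]; apply/hasP; exists k; first by rewrite mem_index_iota; lia.
by rewrite /= hornerD hornerX hornerC addNr.
Qed.

Lemma size_prod_lin (r : seq nat) :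
  size (\prod_(i <- r) ('X + (i%:R)%:P) : {poly C}) = (size r).+1.
Proof.
have -> : \prod_(i <- r) ('X + (i%:R)%:P) = \prod_(i <- r) ('X - (- (i%:R : C))%:P).
  by apply: eq_bigr => i _; rewrite polyCN opprK.
by rewrite size_prod_XsubC.
Qed.

Lemma size_gg : (size gg <= p)%N.
Proof.
rewrite /gg; apply: (leq_trans (size_sum _ _ _)).
apply/bigmax_leqP_seq => j; rewrite mem_index_iota => jr _.
apply: (leq_trans (size_mul_leq _ _)).
rewrite /binA /QQ.
rewrite !size_scale ?invr_eq0 ?pnatr_eq0 -?lt0n ?fact_gt0 //.
rewrite !size_prod_lin !size_iota; lia.
Qed.

Lemma gg_real : map_poly Num.conj gg = gg.
Proof.
have E (i : nat) : map_poly Num.conj ('X + (i%:R)%:P : {poly C}) = 'X + (i%:R)%:P.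
  by rewrite rmorphD /= map_polyX map_polyC /= rmorph_nat.
rewrite /gg rmorph_sum; apply: eq_bigr => j _.
rewrite rmorphM /= /binA /QQ !map_polyZ !rmorph_prod /=.
by rewrite !fmorphV !rmorph_nat !(eq_bigr _ (fun i _ => E i)).
Qed.

Lemma QQ_eval j i : (i <= (d - p).+1)%N ->
  (QQ j).[- (i%:R)] = (\prod_((d - p).+1 <= t < (d - j).+1) (t - i)%N)%:R.
Proof.
move=> hi; rewrite /QQ horner_prod natr_prod big_nat_cond [RHS]big_nat_cond.
apply: eq_bigr => t /andP[/andP[ht _] _]; rewrite lin_eval natrB //; lia.
Qed.

Lemma term_main j i : (p <= d)%N -> (i <= d - p)%N -> (1 <= j <= p)%N ->
  (binA C j * ((((d - j)%N)`!%:R)^-1 *: QQ j)).[- (i%:R)] =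
  (((d - p - i)%N)`!%:R)^-1 * ((-1)^+(j.-1) * ('C(i, j.-1))%:R / (((d - j) ^_ i)%N)%:R).
Proof.
move=> pd ip jp.
rewrite hornerM binA_eval hornerZ QQ_eval; last by lia.
have E := prod_fact (d - p) (d - j) i.
have E' : ((d - j) ^_ i * (d - j - i)`!)%N = ((d - j)%N)`! by rewrite ffact_fact //; lia.
have F1 : ((d - p - i)%N)`!%:R != 0 :> C by rewrite pnatr_eq0 -lt0n fact_gt0.
have F2 : ((d - j - i)%N)`!%:R != 0 :> C by rewrite pnatr_eq0 -lt0n fact_gt0.
have F3 : ((d - j) ^_ i)%:R != 0 :> C by rewrite pnatr_eq0 -lt0n ffact_gt0; lia.
rewrite -E' natrM.
have -> : (\prod_((d - p).+1 <= t < (d - j).+1) (t - i))%:R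
   = ((d - j - i)`!)%:R / ((d - p - i)%N)`!%:R :> C.
  rewrite -E; try lia.
  by rewrite natrM [X in _ = X / _]mulrC mulfK.
field.
by rewrite F1 F2 F3.
Qed.

Lemma sign_sq k : ((-1) ^+ k * (-1) ^+ k : C) = 1.
Proof. by rewrite -exprMn mulrNN mulr1 expr1n. Qed.

Lemma gg_sign i : (2 <= p)%N -> (p < d)%N -> (2 * p <= d + 2)%N -> (i <= p - 1)%N ->
  0 < (-1) ^+ i * gg.[- (i%:R)].
Proof.
move=> hp hpd h2 hi.
have [im|ie] := leqP i (d - p).
  have -> : gg.[- (i%:R)] = (((d - p - i)%N)`!%:R)^-1 *
      \sum_(k < i.+1) (-1)^+k * ('C(i,k)%:R : C) / ((d.-1 - k) ^_ i)%:R.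
    rewrite /gg horner_sum big_nat_cond.
    rewrite (eq_bigr (fun j => (((d - p - i)%N)`!%:R)^-1 *
       ((-1)^+(j.-1) * ('C(i, j.-1))%:R / (((d - j) ^_ i)%N)%:R))); last first.
      by move=> j /andP[jr _]; rewrite term_main //; lia.
    rewrite -big_nat_cond -mulr_sumr; congr (_ * _).
    rewrite big_add1 /= (big_cat_nat _ (n := i.+1)) //=; last by lia.
    rewrite [X in _ + X]big_nat_cond [X in _ + X]big1 ?addr0; last first.
      by move=> k /andP[/andP[ki _] _]; rewrite bin_small // mulr0n mulr0 mul0r.
    rewrite big_mkord; apply: eq_bigr => k _.
    by have -> : (d - k.+1 = d.-1 - k)%N by lia.
  rewrite mulrCA altF; last by lia.
  rewrite !mulrA -[_ * (-1) ^+ i * (-1) ^+ i]mulrA.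
  rewrite sign_sq mulr1.
  apply: mulr_gt0; first apply: mulr_gt0.
  - by rewrite invr_gt0 ltr0n fact_gt0.
  - by rewrite ltr0n ffact_gt0; lia.
  - by rewrite invr_gt0 ltr0n ffact_gt0; lia.
have ie' : i = (p - 1)%N by lia.
have -> : gg.[- (i%:R)] = (-1) ^+ (p - 1) * (((d - p)%N)`!%:R)^-1.
  rewrite /gg horner_sum big_nat_recr /=; last by lia.
  rewrite big_nat_cond big1 ?add0r; last first.
    move=> j /andP[/andP[j1 jp] _].
    rewrite hornerM [(_ *: QQ _).[_]]hornerZ QQ_eval; last by lia.
    rewrite big_nat_recl /=; last by lia.
    have -> : ((d - p).+1 - i = 0)%N by lia.
    by rewrite mul0n mulr0n !mulr0.
  rewrite hornerM binA_eval [(_ *: QQ _).[_]]hornerZ /QQ big_geq // hornerC mulr1.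
  by rewrite ie' subn1 binn mulr1.
by rewrite ie' mulrA sign_sq mul1r invr_gt0 ltr0n fact_gt0.
Qed.
End Main.

Theorem theorem2p6 (C : numClosedFieldType) (d p : nat)
  (hp : (2 <= p)%N) (hpd : (p < d)%N) (h2 : (2 * p <= d + 2)%N) :
  exists alpha : nat -> C,
    (forall i : nat, (1 <= i <= p - 1)%N ->
       [/\ alpha i \is Num.real, - (i%:R) < alpha i & alpha i < - ((i.-1)%:R)]) /\
    (forall z : C, root (fdp C d p) z <->
       (exists2 k : nat, (1 <= k <= d - p)%N & z = - (k%:R)) \/
       (exists2 i : nat, (1 <= i <= p - 1)%N & z = alpha i)).
Proof.
set g := gg C d p.
have sgn i : (i <= p - 1)%N -> 0 < (-1) ^+ i * g.[- (i%:R)].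
  by move=> hi; apply: gg_sign.
have ex i : exists x : C, ((1 <= i <= p - 1)%N ==>
    [&& x \is Num.real, - (i%:R) < x, x < - ((i.-1)%:R) & root g x]).
  have [hi|hi] := boolP (1 <= i <= p - 1)%N; last first.
    by exists 0.
  have [k ik] : exists k, i = k.+1 by exists i.-1; lia.
  subst i; rewrite /=.
  have ab : - (k.+1%:R) < - (k%:R) :> C by rewrite ltrN2 ltr_nat.
  have gab : g.[- (k.+1%:R)] * g.[- (k%:R)] < 0.
    have H := mulr_gt0 (sgn k.+1 ltac:(lia)) (sgn k ltac:(lia)).
    by rewrite exprS mulN1r !mulNr mulrACA sign_sq mul1r oppr_gt0 in H.
  have aR : - (k.+1%:R) \is @Num.real C by rewrite realN realn.
  have bR : - (k%:R) \is @Num.real C by rewrite realN realn.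
  have [x xR /andP[/orP[xab|xba] xr]] := @ivtC C (size g) g _ _ (leqnn _) (gg_real C d p)
     aR bR gab.
    by exists x; case/andP: xab => -> ->; rewrite xR xr.
  by move: xba => /andP[h1 h3]; have := lt_trans (lt_trans h1 h3) ab; rewrite ltxx.
pose alpha i := xchoose (ex i).
have AP i : (1 <= i <= p - 1)%N -> [&& alpha i \is Num.real, - (i%:R) < alpha i,
    alpha i < - ((i.-1)%:R) & root g (alpha i)].
  by move=> hi; exact: (implyP (xchooseP (ex i)) hi).
have lt_alpha i j : (1 <= i <= p - 1)%N -> (1 <= j <= p - 1)%N -> (i < j)%N ->
    alpha j < alpha i.
  move=> hi hj ij.
  case/and4P: (AP i hi) => _ hh1 _ _; case/and4P: (AP j hj) => _ _ hh2 _.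
  apply: lt_trans hh1; apply: (lt_le_trans hh2).
  by rewrite lerN2 ler_nat; lia.
exists alpha; split.
  by move=> i hi; case/and4P: (AP i hi).
move=> z; rewrite fdp_fact rootM -/g; split.
  case/orP => [/root_PP H|gz]; first by left.
  right; have [/hasP[i]|nh] := boolP (has (fun i => z == alpha i) (iota 1 (p - 1))).
    by rewrite mem_iota => hi /eqP ->; exists i => //; lia.
  exfalso.
  have g0 : g != 0.
    by apply/eqP => g0; have := sgn 0%N (leq0n _); rewrite g0 horner0 mulr0 ltxx.
  have Hall : all (root g) (z :: map alpha (iota 1 (p - 1))).
    rewrite /= gz /=; apply/allP => y /mapP[i]; rewrite mem_iota => hi ->.
    by case/and4P: (AP i ltac:(lia)).
  have Hu : uniq (z :: map alpha (iota 1 (p - 1))).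
    rewrite /= map_inj_in_uniq ?iota_uniq ?andbT.
      apply/mapP => [[i]]; rewrite mem_iota => hi e; move/hasP: nh; apply.
      by exists i; [rewrite mem_iota | apply/eqP].
    move=> i j; rewrite !mem_iota => hi hj e.
    have [ij|ji|//] := ltngtP i j.
      by have := lt_alpha i j ltac:(lia) ltac:(lia) ij; rewrite e ltxx.
    by have := lt_alpha j i ltac:(lia) ltac:(lia) ji; rewrite e ltxx.
  have := max_poly_roots g0 Hall Hu.
  have sg := size_gg C d p; rewrite -/g in sg.
  rewrite /= size_map size_iota.
move=> H; have := leq_trans H sg. clear -hp. lia.
case => [[k hk ->]|[i hi ->]]; apply/orP; [left; apply/root_PP; by exists k | right].
by case/and4P: (AP i hi).
Qed.
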